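(* Let $T$ be a $J$-unitary operator on ${\cal K}$. Then $$\Re e\,V(T)=({\bf 1}+T)\bigl({\bf 1}+T^*T\bigr)^{-1}({\bf 1}+T)^*-{\bf 1},$$ where $\Re e\,V(T)=\tfrac12(V(T)+V(T)^* )$.
   Context: ${\cal H}$ is a separable complex Hilbert space, ${\cal K}={\cal H}\oplus{\cal H}$, $J=\begin{pmatrix}{\bf 1}&0\\0&-{\bf 1}\end{pmatrix}$. A bounded invertible $T$ on ${\cal K}$ is $J$-unitary if $T^*JT=J$; writing $T=\begin{pmatrix}a&b\\c&d\end{pmatrix}$ the blocks $a,d$ are invertible. $V(T)$ denotes the unitary $\begin{pmatrix}(a^* )^{-1}&bd^{-1}\\-d^{-1}c&d^{-1}\end{pmatrix}$. *)

(* Defs.v *)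
From HB Require Import structures.
From mathcomp Require Import all_boot all_order all_algebra.
From mathcomp Require Import complex.
From mathcomp Require Import reals.
Set Implicit Arguments. Unset Strict Implicit. Unset Printing Implicit Defensive.
Import Order.TTheory GRing.Theory Num.Theory.
Local Open Scope ring_scope.

Section Hilbert.
Variable R : realType.
Local Notation C := R[i].

Section Space.
Variable H : lmodType C.
Variable ip : H -> H -> C.  (* inner product, linear in the first argument *)

Definition nrm2 (x : H) : C := ip x x.

Definition is_inner_product : Prop :=
  [/\ (forall (k : C) (x y z : H), ip (k *: x + y) z = k * ip x z + ip y z),
      (forall x y : H, ip y x = conjc (ip x y)),
      (forall x : H, 0 <= ip x x) &
      (forall x : H, ip x x = 0 -> x = 0)].

Definition cauchy_seq (u : nat -> H) : Prop :=
  forall e : C, 0 < e -> exists N : nat, forall m n : nat,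
    (N <= m)%N -> (N <= n)%N -> nrm2 (u m - u n) < e.

Definition converges_to (u : nat -> H) (l : H) : Prop :=
  forall e : C, 0 < e -> exists N : nat, forall n : nat,
    (N <= n)%N -> nrm2 (u n - l) < e.

Definition complete_space : Prop :=
  forall u : nat -> H, cauchy_seq u -> exists l, converges_to u l.

Definition separable_space : Prop :=
  exists s : nat -> H, forall (x : H) (e : C), 0 < e ->
    exists n : nat, nrm2 (x - s n) < e.

Definition separable_hilbert : Prop :=
  [/\ is_inner_product, complete_space & separable_space].

Definition bounded_op (A : H -> H) : Prop :=
  (forall (k : C) (x y : H), A (k *: x + y) = k *: A x + A y) /\
  exists M : C, forall x : H, nrm2 (A x) <= M * nrm2 x.

Definition is_adjoint (A B : H -> H) : Prop :=
  forall x y : H, ip (A x) y = ip x (B y).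

Definition is_inverse (A B : H -> H) : Prop :=
  (forall x, B (A x) = x) /\ (forall x, A (B x) = x).

End Space.

Section Sum.
Variable H : lmodType C.
Variable ip : H -> H -> C.

Definition Kspace := (H * H)%type.

Definition ipK (z w : Kspace) : C := ip z.1 w.1 + ip z.2 w.2.

Definition Jop (z : Kspace) : Kspace := (z.1, - z.2).

(* blocks of T = [[a, b], [c, d]] *)
Definition blk_a (T : Kspace -> Kspace) (x : H) : H := (T (x, 0)).1.
Definition blk_b (T : Kspace -> Kspace) (y : H) : H := (T (0, y)).1.
Definition blk_c (T : Kspace -> Kspace) (x : H) : H := (T (x, 0)).2.
Definition blk_d (T : Kspace -> Kspace) (y : H) : H := (T (0, y)).2.

Definition J_unitary (T Tst : Kspace -> Kspace) : Prop :=
  [/\ bounded_op ipK T,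
      (exists Ti, bounded_op ipK Ti /\ is_inverse T Ti),
      is_adjoint ipK T Tst &
      (forall z, Tst (Jop (T z)) = Jop z)].

(* V(T) = [[ inverse of adjoint(a), b d^{-1} ], [ -d^{-1} c, d^{-1} ]],
   given ainvs = inverse of adjoint(a), and dinv = d^{-1}. *)
Definition Vop (T : Kspace -> Kspace) (ainvs dinv : H -> H) (z : Kspace) : Kspace :=
  (ainvs z.1 + blk_b T (dinv z.2), - dinv (blk_c T z.1) + dinv z.2).

End Sum.
End Hilbert.

(* Main.v *)
Require Import Defs.
From HB Require Import structures.
From mathcomp Require Import all_boot all_order all_algebra.
From mathcomp Require Import complex.
From mathcomp Require Import reals ring.
Import Order.TTheory GRing.Theory Num.Theory.
Local Open Scope ring_scope.
Set Implicit Arguments.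

Section Gen.
Variable R : realType.
Variable V : lmodType R[i].
Variable ip : V -> V -> R[i].
Variable hip : is_inner_product ip.

Lemma ip0l z : ip 0 z = 0.
Proof.
case: hip => lin _ _ _.
have := lin 1 0 0 z; rewrite scaler0 addr0 mul1r => h.
by have := congr1 (fun t => t - ip 0 z) h; rewrite /= addrK subrr => /esym.
Qed.

Lemma ipDl x y z : ip (x + y) z = ip x z + ip y z.
Proof. case: hip => lin _ _ _; by rewrite -[x]scale1r lin mul1r scale1r. Qed.

Lemma ipZl k x z : ip (k *: x) z = k * ip x z.
Proof. case: hip => lin _ _ _; by rewrite -[k *: x]addr0 lin ip0l addr0. Qed.

Lemma ipNl x z : ip (- x) z = - ip x z.
Proof. by rewrite -scaleN1r ipZl mulN1r. Qed.

Lemma ipBl x y z : ip (x - y) z = ip x z - ip y z.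
Proof. by rewrite ipDl ipNl. Qed.

Lemma ipC x y : ip y x = conjc (ip x y).
Proof. by case: hip. Qed.

Lemma ip0r z : ip z 0 = 0.
Proof. by rewrite ipC ip0l rmorph0. Qed.

Lemma ipDr x y z : ip z (x + y) = ip z x + ip z y.
Proof. by rewrite ipC ipDl rmorphD /= -!ipC. Qed.

Lemma ipNr x z : ip z (- x) = - ip z x.
Proof. by rewrite ipC ipNl rmorphN /= -ipC. Qed.

Lemma ipBr x y z : ip z (x - y) = ip z x - ip z y.
Proof. by rewrite ipDr ipNr. Qed.

Lemma nondeg1 x y : (forall w, ip x w = ip y w) -> x = y.
Proof.
move=> h; apply/eqP; rewrite -subr_eq0; apply/eqP.
case: hip => _ _ _ hd; apply: hd; by rewrite ipBl h subrr.
Qed.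

Lemma nondeg2 x y : (forall w, ip w x = ip w y) -> x = y.
Proof. move=> h; apply: nondeg1 => w; by rewrite ipC h -ipC. Qed.

Lemma adj_sym {A B} : is_adjoint ip A B -> is_adjoint ip B A.
Proof. move=> h x y; by rewrite ipC -h -ipC. Qed.

Lemma adj_lin {A B} : is_adjoint ip A B ->
  forall k x y, A (k *: x + y) = k *: A x + A y.
Proof.
move=> h k x y; apply: nondeg1 => w.
case: hip => lin _ _ _.
by rewrite h lin !lin -!h.
Qed.

Lemma adj_add {A B} : is_adjoint ip A B -> forall x y, A (x + y) = A x + A y.
Proof. move=> h x y; apply: nondeg1 => w; by rewrite h ipDl -!h -ipDl. Qed.

Lemma adj_opp {A B} : is_adjoint ip A B -> forall x, A (- x) = - A x.
Proof.
move=> h x; apply: nondeg1 => w; by rewrite h !ipNl h.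
Qed.

Lemma inv_lin (A B : V -> V) :
  is_inverse A B -> (forall k x y, A (k *: x + y) = k *: A x + A y) ->
  forall k x y, B (k *: x + y) = k *: B x + B y.
Proof.
case=> h1 h2 hl k x y.
by rewrite -{1}(h2 x) -{1}(h2 y) -hl h1.
Qed.
End Gen.

Lemma ipK_inner (R : realType) (H : lmodType R[i]) (ip : H -> H -> R[i]) :
  is_inner_product ip -> is_inner_product (ipK ip).
Proof.
move=> hip; have [lin sym pos def] := hip.
split.
- move=> k [x1 x2] [y1 y2] [z1 z2]; rewrite /ipK /=.
  rewrite !lin; ring.
- move=> [x1 x2] [y1 y2]; rewrite /ipK /= rmorphD /=; by rewrite -!sym.
- move=> [x1 x2]; rewrite /ipK /=; exact: addr_ge0.
- move=> [x1 x2]; rewrite /ipK /= => /eqP; rewrite paddr_eq0 // => /andP[/eqP h1 /eqP h2].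
  by rewrite (def _ h1) (def _ h2).
Qed.
Lemma pairD (R : realType) (H : lmodType R[i]) (x1 x2 y1 y2 : H) : ((x1+y1, x2+y2) : Kspace H) = (x1,x2)+(y1,y2).
Proof. by []. Qed.
Lemma pairN (R : realType) (H : lmodType R[i]) (x1 x2 : H) : ((-x1, -x2) : Kspace H) = -(x1,x2).
Proof. by []. Qed.
Lemma pair0 (R : realType) (H : lmodType R[i]) : ((0, 0) : Kspace H) = 0.
Proof. by []. Qed.
Lemma abcd (R : realType) (A B C D : R[i]) : A - B = C - D -> A + D = C + B.
Proof. move=> h; rewrite -[A](subrK B) h; ring. Qed.
Lemma abcd2 (R : realType) (A1 A2 B1 B2 : R[i]) :
  B1 + A2 = A1 + B2 -> A1 + A2 + (B1 + B2) = (A1 + B2) + (A1 + B2).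
Proof. move=> h; transitivity ((A1 + B2) + (B1 + A2)); [ring | by rewrite h]. Qed.
Lemma adj_0 (R : realType) (V : lmodType R[i]) (ip : V -> V -> R[i]) (hip : is_inner_product ip) A B :
  is_adjoint ip A B -> A 0 = 0.
Proof. move=> h; apply: (nondeg1 hip) => w; by rewrite h !ip0l. Qed.
Lemma zfour (K : pzRingType) (M : lmodType K) (a n z : M) : a + a - z + (n + n - z) = 2%:R *: (a + n - z).
Proof. by rewrite scaler_nat mulr2n addrACA [in RHS]addrACA (addrACA a a). Qed.
Unset Implicit Arguments.

Theorem proposition3p21 (R : realType) (H : lmodType R[i]) (ip : H -> H -> R[i])
  (hH : separable_hilbert ip)
  (T Tst : Kspace H -> Kspace H) (hT : J_unitary ip T Tst)
  (* as_ = adjoint of a, ainvs = inverse of as_, dinv = inverse of d *)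
  (as_ ainvs dinv : H -> H)
  (has : is_adjoint ip (blk_a T) as_)
  (hainvs : is_inverse as_ ainvs)
  (hdinv : is_inverse (blk_d T) dinv)
  (* S = inverse of (1 + Tst T) *)
  (S : Kspace H -> Kspace H) (hS : is_inverse (fun z => z + Tst (T z)) S)
  (* W = adjoint of V(T),  U = adjoint of (1 + T) *)
  (W U : Kspace H -> Kspace H)
  (hW : is_adjoint (ipK ip) (Vop T ainvs dinv) W)
  (hU : is_adjoint (ipK ip) (fun z => z + T z) U) :
  forall z : Kspace H,
    2^-1 *: (Vop T ainvs dinv z + W z) =
    (S (U z) + T (S (U z))) - z.
Proof.
move=> z0.
have hipH : is_inner_product ip by case: hH.
have hipK := ipK_inner hipH.
case: hT => _ [Ti [_ [hTi1 hTi2]]] hTst hJ.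
have TD := adj_add hipK hTst.
have TN := adj_opp hipK hTst.
have T0 := adj_0 hipK hTst.
have hTst' := adj_sym hipK hTst.
have TsD := adj_add hipK hTst'.
have TsN := adj_opp hipK hTst'.
have hW' := adj_sym hipK hW.
set V := Vop T ainvs dinv in hW hW' *.
have VD := adj_add hipK hW.
have VN := adj_opp hipK hW.
have [dinvK dinvK'] := hdinv.
rewrite /blk_d in dinvK dinvK'.
have Tsplit x y : T (x, y) = T (x, 0) + T (0, y).
  by rewrite -TD -pairD addr0 add0r.
have dD x y : (T (0, x + y)).2 = (T (0, x)).2 + (T (0, y)).2.
  by rewrite (_ : ((0, x + y) : Kspace H) = (0, x) + (0, y)) ?TD // -pairD addr0.
have bD x y : (T (0, x + y)).1 = (T (0, x)).1 + (T (0, y)).1.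
  by rewrite (_ : ((0, x + y) : Kspace H) = (0, x) + (0, y)) ?TD // -pairD addr0.
have dinvD x y : dinv (x + y) = dinv x + dinv y.
  by rewrite -{1}(dinvK' x) -{1}(dinvK' y) -dD dinvK.
have JJ v : T (Jop (Tst (Jop v))) = v.
  have e : Tst (Jop v) = Jop (Ti v) by rewrite -(hJ (Ti v)) hTi2.
  by rewrite e /Jop /= opprK -surjective_pairing hTi2.
have asE w : as_ w = (Tst (w, 0)).1.
  apply: (nondeg2 hipH) => v.
  rewrite -has /blk_a.
  by have := hTst (v, 0) (w, 0); rewrite /ipK /= (ip0r hipH) (ip0l hipH) !addr0 => ->.
have ainvsE x : ainvs x = (T (x, 0)).1 - (T (0, dinv ((T (x, 0)).2))).1.
  set y := dinv _.
  have eT : T (x, - y) = ((T (x, 0)).1 - (T (0, y)).1, 0).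
    rewrite Tsplit (_ : ((0, - y) : Kspace H) = - (0, y)) ?TN; last by rewrite -pairN oppr0.
    rewrite /y; have h := dinvK' (T (x, 0)).2.
    move: h; case: (T (x,0)) => p1 p2 /=; case: (T (0, dinv p2)) => q1 q2 /= ->.
    by rewrite -pairN -pairD subrr.
  have e2 := hJ (x, - y).
  rewrite eT /Jop /= oppr0 in e2.
  rewrite -{1}[x]/((x, - - y).1) -e2 -asE; exact: hainvs.1.
have VNu u : V (u.1, (T u).2) = ((T u).1, u.2).
  case: u => x y /=.
  rewrite /V /Vop /blk_b /blk_c /=.
  rewrite [T (x, y)]Tsplit /= dinvD dinvK bD ainvsE.
  rewrite addrA subrK addKr.
  by [].
have Nsurj w : exists u, (u.1, (T u).2) = w.
  case: w => w1 w2; exists (w1, dinv (w2 - (T (w1, 0)).2)) => /=.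
  by rewrite Tsplit /= dinvK' addrC subrK.
have Jid u v : ip (T u).1 (T v).1 + ip u.2 v.2 = ip u.1 v.1 + ip (T u).2 (T v).2.
  have h := hTst u (Jop (T v)); rewrite hJ /ipK /Jop /= !(ipNr hipH) in h.
  exact: abcd h.
have Viso x y : ipK ip (V x) (V y) = ipK ip x y.
  have [u <-] := Nsurj x; have [v <-] := Nsurj y.
  rewrite !VNu /ipK /=; exact: Jid u v.
have WV x : W (V x) = x.
  apply: (nondeg2 hipK) => w; by rewrite -hW Viso.
have dinv0 : dinv 0 = 0 by have := dinvK 0; rewrite pair0 T0.
have dsiP y q : ip (dinv y) q = ip y (W (0, q)).2.
  have := hW (0, y) (0, q); rewrite /V /Vop /ipK /blk_c /blk_b /= pair0 T0 /=.
  by rewrite dinv0 oppr0 add0r (ip0r hipH) (ip0l hipH) !add0r.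
have dstarP x y : ip (T (0, x)).2 y = ip x (Tst (0, y)).2.
  by have := hTst (0, x) (0, y); rewrite /ipK /= (ip0r hipH) (ip0l hipH) !add0r.
have dsurj q : (Tst (0, (W (0, q)).2)).2 = q.
  apply: (nondeg2 hipH) => x; by rewrite -dstarP -dsiP dinvK.
have Vsurj t : exists z, V z = t.
  case: t => p q.
  set r := q + (Tst (p, 0)).2.
  set v2 := (W (0, r)).2.
  set u := Jop (Tst (Jop ((p, v2) : Kspace H))).
  exists (u.1, (T u).2); rewrite VNu /u JJ /=.
  have -> : Tst (p, - v2) = Tst (p, 0) - Tst (0, v2).
    by rewrite -TsN -TsD -pairN -pairD oppr0 addr0 add0r.
  rewrite /= dsurj /r; congr (_, _).
  by rewrite opprB addrK.
have VW x : V (W x) = x.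
  by have [y <-] := Vsurj x; rewrite WV.
have MN u : (((T u).1, u.2) + (u.1, (T u).2) : Kspace H) = u + T u.
  case: (T u) => t1 t2; case: u => u1 u2 /=.
  by rewrite -!pairD [t1 + u1]addrC.
set s := S (U z0).
have hs : s + Tst (T s) = U z0 by exact: hS.2.
set ns := ((s.1, (T s).2) : Kspace H).
have key : W z0 + z0 = ns + ns.
  apply: (nondeg2 hipK) => w; have [u <-] := Nsurj w.
  rewrite !(ipDr hipK) -hW VNu -(ipDl hipK) MN (hU u z0) -hs (ipDr hipK) -hTst.
  rewrite /ipK /=; apply: abcd2; exact: Jid u s.
have e1 : W z0 = ns + ns - z0 by rewrite -key addrK.
have e2 : V ns + V ns - V z0 = z0 by rewrite -VN -!VD -e1 VW.
have e3 : s + T s = V ns + ns by rewrite VNu MN.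
have e4 : V z0 = V ns + V ns - z0.
  by rewrite -{2}e2 opprB addrCA subrr addr0.
rewrite e1 e3 e4 zfour scalerA mulVf ?scale1r //.
by rewrite pnatr_eq0.
Qed.
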